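(* For all integers $n\geq 1$ and $p\geq 0$, \begin{align*} \sum_{j=1}^n \binom{p+j}{j}\binom{2(n-j)}{n-j}\frac{4^j}{j}O_{n-j} &= -\binom{2n}{n}H_pO_n + 2^{2n-1}S_n - \sum_{j=0}^{n-1}4^{n-j-1}C_jS_{n-j-1}\\ &\quad + \frac12\sum_{k=1}^p\frac1k\left(4^n\binom{n+k}{n}(H_{n+k}-H_k) - \frac12\sum_{j=1}^n\binom{j+k-1}{j-1}4^j(H_{k+j-1}-H_k)C_{n-j}\right), \end{align*} where $S_m=\sum_{i=1}^m \frac{H_{m-i}}{i}$ for $m\geq1$ and $S_0=0$. In particular, \[ \sum_{j=1}^n\binom{2(n-j)}{n-j}\frac{4^j}{j}O_{n-j} = 2^{2n-1}S_n - \sum_{j=1}^n 4^{j-1}C_{n-j}S_{j-1}. \]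
   Context: $H_n=\sum_{j=1}^n \frac1j$ is the $n$th harmonic number ($H_0=0$), $O_n=\sum_{j=1}^n\frac{1}{2j-1}$ is the $n$th odd harmonic number ($O_0=0$), and $C_n=\frac{1}{n+1}\binom{2n}{n}$ is the $n$th Catalan number. An empty sum (e.g. $\sum_{k=1}^0$) is $0$. *)

(* Defs.v *)
From mathcomp Require Import all_boot all_order all_algebra.
Set Implicit Arguments. Unset Strict Implicit. Unset Printing Implicit Defensive.
Import Order.TTheory GRing.Theory Num.Theory.
Local Open Scope ring_scope.

Definition H (n : nat) : rat := \sum_(1 <= j < n.+1) (j%:R)^-1.
Definition O (n : nat) : rat := \sum_(1 <= j < n.+1) ((2 * j - 1)%N%:R)^-1.
Definition Cat (n : nat) : rat := 'C(2 * n, n)%:R / (n.+1)%:R.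
Definition Sh (m : nat) : rat := \sum_(1 <= i < m.+1) H (m - i) / i%:R.

(* Main.v *)
Require Import Defs.
From mathcomp Require Import all_boot all_order all_algebra.
From mathcomp Require Import ring lra zify.
From Stdlib Require Import FunctionalExtensionality.
Import Order.TTheory GRing.Theory Num.Theory.
Local Open Scope ring_scope.

Definition conv (f g : nat -> rat) (m : nat) : rat := \sum_(i < m.+1) f i * g (m - i)%N.

Lemma convC f g m : conv f g m = conv g f m.
Proof.
rewrite /conv (reindex_inj rev_ord_inj) /=; apply: eq_bigr => i _.
rewrite subKn 1?mulrC //; have := ltn_ord i; by rewrite ltnS.
Qed.

Definition Pn (N : nat) (f : nat -> rat) : {poly rat} := \poly_(i < N) f i.

Lemma conv_poly N f g m : (m < N)%N -> conv f g m = (Pn N f * Pn N g)`_m.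
Proof.
move=> mN; rewrite coefM /conv; apply: eq_bigr => i _.
rewrite !coef_poly; have iN : (i < N)%N by have := ltn_ord i; lia.
rewrite iN; have -> : (m - i < N)%N by lia.
by [].
Qed.

Lemma coefM_local (N : nat) (p q r : {poly rat}) m : (m < N)%N ->
  (forall i, (i < N)%N -> p`_i = q`_i) -> (p * r)`_m = (q * r)`_m.
Proof.
move=> mN H; rewrite !coefM; apply: eq_bigr => i _; rewrite H //.
have := ltn_ord i; lia.
Qed.

Lemma coefM_localr (N : nat) (p q r : {poly rat}) m : (m < N)%N ->
  (forall i, (i < N)%N -> p`_i = q`_i) -> (r * p)`_m = (r * q)`_m.
Proof. by move=> mN H; rewrite mulrC (@coefM_local N p q r m mN H) mulrC. Qed.

Lemma Pn_conv N f g i : (i < N)%N -> (Pn N (conv f g))`_i = (Pn N f * Pn N g)`_i.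
Proof. by move=> iN; rewrite coef_poly iN (@conv_poly N _ _ _ iN). Qed.

Lemma convA f g h m : conv f (conv g h) m = conv (conv f g) h m.
Proof.
rewrite (@conv_poly m.+1 f (conv g h) m (ltnSn m)) (@conv_poly m.+1 (conv f g) h m (ltnSn m)).
rewrite (@coefM_localr m.+1 (Pn m.+1 (conv g h)) (Pn m.+1 g * Pn m.+1 h) (Pn m.+1 f) m (ltnSn m)); last by move=> i; apply: Pn_conv.
rewrite (@coefM_local m.+1 (Pn m.+1 (conv f g)) (Pn m.+1 f * Pn m.+1 g) (Pn m.+1 h) m (ltnSn m)); last by move=> i; apply: Pn_conv.
by rewrite mulrA.
Qed.

Lemma convZr f g (a : rat) m : conv f (fun i => a * g i) m = a * conv f g m.
Proof. rewrite /conv mulr_sumr; apply: eq_bigr => i _; ring. Qed.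

Lemma convBr f g h m : conv f (fun i => g i - h i) m = conv f g m - conv f h m.
Proof. rewrite /conv -sumrB; apply: eq_bigr => i _; ring. Qed.

Lemma conv_ext f f' g g' m : (forall i, f i = f' i) -> (forall i, g i = g' i) ->
  conv f g m = conv f' g' m.
Proof. by move=> Hf Hg; apply: eq_bigr => i _; rewrite Hf Hg. Qed.

Definition sh (f : nat -> rat) m := if m is m'.+1 then f m' else 0.

Lemma conv_sh z f n : conv z (sh f) n.+1 = conv z f n.
Proof.
rewrite /conv big_ord_recr /= subnn mulr0 addr0; apply: eq_bigr => i _.
by rewrite /= subSn // -ltnS.
Qed.
Definition B m : rat := 'C(2 * m, m)%:R.
Definition g4 m : rat := 4%:R ^+ m.
Definition l m : rat := 4%:R ^+ m / m%:R.
Definition BO m := B m * O m.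
Definition E p m : rat := 4%:R ^+ m * 'C(m + p, m)%:R.
Definition Y q m : rat := 4%:R ^+ m * 'C(m + q, m)%:R * (H (m + q) - H q).

Lemma natS_neq0 m : (m.+1%:R : rat) != 0.
Proof. by rewrite pnatr_eq0. Qed.

Lemma uniq_rec (u v al be : nat -> rat) : u 0%N = v 0%N ->
  (forall m, m.+1%:R * u m.+1 = al m * u m + be m) ->
  (forall m, m.+1%:R * v m.+1 = al m * v m + be m) -> forall m, u m = v m.
Proof.
move=> h0 hu hv; elim=> // m IH.
by apply: (mulfI (natS_neq0 m)); rewrite hu hv IH.
Qed.

Lemma il i : i%:R * l i = 4%:R ^+ i - (i == 0%N)%:R.
Proof.
case: i => [|i]; rewrite /l; first by rewrite mul0r expr0 subrr.
rewrite /= subr0; field; by rewrite addrC natr1 natS_neq0.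
Qed.

Lemma l0 : l 0 = 0.
Proof. by rewrite /l invr0 mulr0. Qed.

Lemma l_rec (a : rat) (w : nat -> rat) :
  (forall i, i.+1%:R * w i.+1 = 4%:R * (i%:R + a) * w i) ->
  forall m, m.+1%:R * conv l w m.+1 = 4%:R * (m%:R + a) * conv l w m + 4%:R * w m.
Proof.
move=> hw m.
have -> : m.+1%:R * conv l w m.+1 =
   \sum_(i < m.+2) (i%:R * l i) * w (m.+1 - i)%N
 + \sum_(i < m.+2) l i * ((m.+1 - i)%N%:R * w (m.+1 - i)%N).
  rewrite /conv mulr_sumr -big_split; apply: eq_bigr => i _ /=.
  have hi : (i <= m.+1)%N by have := ltn_ord i; lia.
  have e : m.+1%:R = i%:R + (m.+1 - i)%N%:R :> rat by rewrite -natrD subnKC.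
  rewrite e; ring.
have -> : \sum_(i < m.+2) (i%:R * l i) * w (m.+1 - i)%N
    = 4%:R * \sum_(i < m.+1) 4%:R ^+ i * w (m - i)%N.
  have z : (0%N)%:R * l 0 = 0 :> rat by rewrite l0 mulr0.
  rewrite big_ord_recl /= z mul0r add0r mulr_sumr; apply: eq_bigr => i _.
  rewrite /bump /= add1n.
  rewrite il /= subr0 subSS exprS; ring.
have -> : \sum_(i < m.+2) l i * ((m.+1 - i)%N%:R * w (m.+1 - i)%N)
    = \sum_(i < m.+1) (4%:R * (m%:R + a) * (l i * w (m - i)%N)
        - 4%:R * (4%:R ^+ i * w (m - i)%N) + 4%:R * (((i : nat) == 0%N)%:R * w (m - i)%N)).
  rewrite big_ord_recr /= subnn mul0r mulr0 addr0; apply: eq_bigr => i _.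
  have hi : (i <= m)%N by have := ltn_ord i; lia.
  rewrite subSn // hw natrB //.
  have := il i; set t := ((i : nat) == 0%N)%:R => hil.
  have -> : 4%:R * (t * w (m - i)%N) = 4%:R * (4%:R ^+ i - i%:R * l i) * w (m - i)%N.
    rewrite hil; ring.
  ring.
have hz : \sum_(i < m.+1) ((i : nat) == 0%N)%:R * w (m - i)%N = w m.
  rewrite big_ord_recl /= subn0 mul1r big1 ?addr0 // => i _.
  by rewrite /bump /= add1n mul0r.
rewrite !big_split /= sumrN -!mulr_sumr hz /conv; ring.
Qed.

Lemma B_rec i : i.+1%:R * B i.+1 = 4%:R * (i%:R + 2%:R^-1) * B i.
Proof.
have hn : (i.+1 * 'C(2 * i.+1, i.+1) = (2 * (2 * i + 1)) * 'C(2 * i, i))%N.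
  have e2 : 'C(2 * i + 1, i) = 'C(2 * i + 1, i.+1).
    have h : (i.+1 <= 2 * i + 1)%N by lia.
    have := bin_sub h; rewrite (_ : (2 * i + 1 - i.+1 = i)%N) //; lia.
  have e1 : 'C(2 * i.+1, i.+1) = (2 * 'C(2 * i + 1, i.+1))%N.
    by rewrite (_ : (2 * i.+1 = (2 * i + 1).+1)%N) ?binS ?e2 //; lia.
  have e3 := mul_bin_diag (2 * i + 1) i.
  rewrite (_ : (2 * i + 1).-1 = 2 * i)%N in e3; last by lia.
  by rewrite e1 mulnCA -e3 mulnA.
rewrite /B -natrM hn natrM natrM natrD natrM; by field.
Qed.

Lemma O0 : O 0 = 0.
Proof. by rewrite /O big_geq. Qed.

Lemma OS m : O m.+1 = O m + ((2 * m + 1)%N%:R)^-1.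
Proof. rewrite /O big_nat_recr //=; congr (_ + (_%:R)^-1); lia. Qed.

Lemma BO_rec m : m.+1%:R * (2%:R * BO m.+1) = 4%:R * (m%:R + 2%:R^-1) * (2%:R * BO m) + 4%:R * B m.
Proof.
rewrite /BO OS.
have -> : m.+1%:R * (2%:R * (B m.+1 * (O m + ((2 * m + 1)%N%:R)^-1)))
   = 2%:R * (m.+1%:R * B m.+1) * (O m + ((2 * m + 1)%N%:R)^-1) by ring.
rewrite B_rec natrD natrM; field.
by move: (natS_neq0 (2 * m)); rewrite -addn1 natrD natrM.
Qed.

Lemma conv0 f g : conv f g 0 = f 0%N * g 0%N.
Proof. by rewrite /conv big_ord_recl big_ord0 addr0. Qed.

Lemma Fa m : 2%:R * BO m = conv l B m.
Proof.
move: m; apply: (@uniq_rec (fun m => 2%:R * BO m) (conv l B) (fun m => 4%:R * (m%:R + 2%:R^-1)) (fun m => 4%:R * B m)).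
- by rewrite conv0 l0 /BO O0 !mul0r !mulr0.
- exact: BO_rec.
- apply: l_rec; exact: B_rec.
Qed.

Lemma E_rec q i : i.+1%:R * E q i.+1 = 4%:R * (i%:R + q.+1%:R) * E q i.
Proof.
have hn := mul_bin_diag (i.+1 + q) i.
rewrite addSn /= in hn.
have hr : i.+1%:R * 'C((i + q).+1, i.+1)%:R = (i + q).+1%:R * 'C(i + q, i)%:R :> rat.
  by rewrite -!natrM hn.
rewrite /E addSn exprS.
transitivity (4%:R * 4%:R ^+ i * (i.+1%:R * 'C((i + q).+1, i.+1)%:R) : rat); first ring.
rewrite hr -addnS natrD; ring.
Qed.

Lemma HS m : H m.+1 = H m + (m.+1%:R)^-1.
Proof. by rewrite /H big_nat_recr. Qed.

Lemma Y_rec q m : m.+1%:R * Y q m.+1 = 4%:R * (m%:R + q.+1%:R) * Y q m + 4%:R * E q m.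
Proof.
have hn := mul_bin_diag (m.+1 + q) m.
rewrite addSn /= in hn.
rewrite /Y /E addSn HS.
have -> : m.+1%:R * (4%:R ^+ m.+1 * 'C((m + q).+1, m.+1)%:R * (H (m + q) + ((m + q).+1%:R)^-1 - H q))
  = 4%:R ^+ m.+1 * (m.+1 * 'C((m + q).+1, m.+1))%N%:R * (H (m + q) + ((m + q).+1%:R)^-1 - H q).
  rewrite natrM; ring.
rewrite -hn natrM exprS -addnS natrD.
have hq : ((m + q).+1%:R : rat) != 0 by exact: natS_neq0.
rewrite -[(m + q).+1]addn1 natrD in hq *.
field; move: hq; rewrite natrD; apply: contra => /eqP h; apply/eqP; rewrite -h; ring.
Qed.

Lemma Fd q m : Y q m = conv l (E q) m.
Proof.
move: m; apply: (@uniq_rec (Y q) (conv l (E q)) (fun m => 4%:R * (m%:R + q.+1%:R)) (fun m => 4%:R * E q m)).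
- by rewrite conv0 l0 mul0r /Y add0n subrr mulr0.
- exact: Y_rec.
- apply: l_rec; exact: E_rec.
Qed.

Lemma hockey p m : \sum_(i < m.+1) 'C(i + p, i)%:R = 'C(m + p.+1, m)%:R :> rat.
Proof.
elim: m => [|m IH]; first by rewrite big_ord1 /= !bin0.
rewrite big_ord_recr /= IH -natrD; congr (_%:R).
rewrite (_ : (m.+1 + p.+1 = (m.+1 + p).+1)%N) ?binS; last by lia.
by rewrite (_ : (m + p.+1 = m.+1 + p)%N) 1?addnC //; lia.
Qed.

Lemma Fc p m : conv (E p) g4 m = E p.+1 m.
Proof.
rewrite /conv /E -hockey mulr_sumr; apply: eq_bigr => i _.
have hi : (i + (m - i) = m)%N by have := ltn_ord i; lia.
rewrite /g4; have -> : (4%:R ^+ m : rat) = 4%:R ^+ i * 4%:R ^+ (m - i) by rewrite -exprD hi.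
ring.
Qed.

Lemma conv_g4S f m : conv g4 f m.+1 = f m.+1 + 4%:R * conv g4 f m.
Proof.
rewrite /conv big_ord_recl /g4 expr0 mul1r subn0 mulr_sumr; congr (_ + _).
by apply: eq_bigr => i _; rewrite lift0 subSS exprS mulrA.
Qed.

Lemma pos_neq0 (x : rat) : 0 < x -> x != 0.
Proof. by move=> h; rewrite gt_eqF. Qed.

Lemma Fb m : 2%:R * conv g4 Cat m = g4 m.+1 - B m.+1.
Proof.
elim: m => [|m IH].
  rewrite conv0 /g4 /Cat /B /= expr0 expr1 bin0 (_ : 'C(2 * 1, 1) = 2%N) //; field.
rewrite conv_g4S mulrDr (mulrCA 2%:R 4%:R) IH.
have e : B m.+2 = 4%:R * (m.+1%:R + 2%:R^-1) * B m.+1 / m.+2%:R.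
  by rewrite -B_rec mulrC mulKf ?natS_neq0.
rewrite e /Cat -/(B m.+1) /g4 exprS.
have hm : (0 : rat) <= m%:R by exact: ler0n.
have h1 : m.+1%:R = m%:R + 1 :> rat by rewrite -natr1.
have h2 : m.+2%:R = m%:R + 2%:R :> rat by rewrite -natr1 -natr1; ring.
rewrite h1 h2 !exprS; field.
apply: pos_neq0; lra.
Qed.

Lemma lg4 m : conv l g4 m = 4%:R ^+ m * H m.
Proof.
rewrite /conv big_ord_recl l0 mul0r add0r /H big_add1 /= big_mkord mulr_sumr.
apply: eq_bigr => i _; rewrite /bump /= add1n /l /g4.
have hi : (i.+1 + (m - i.+1) = m)%N by have := ltn_ord i; lia.
have -> : (4%:R ^+ m : rat) = 4%:R ^+ i.+1 * 4%:R ^+ (m - i.+1) by rewrite -exprD hi. field; by rewrite addrC natr1 natS_neq0.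
Qed.

Lemma Fe n : conv l (conv l g4) n = 4%:R ^+ n * Sh n.
Proof.
transitivity (conv l (fun m => 4%:R ^+ m * H m) n).
  by apply: conv_ext => // i; exact: lg4.
rewrite /conv big_ord_recl l0 mul0r add0r /Sh big_add1 /= big_mkord mulr_sumr.
apply: eq_bigr => i _; rewrite /bump /= add1n /l.
have hi : (i.+1 + (n - i.+1) = n)%N by have := ltn_ord i; lia.
have -> : (4%:R ^+ n : rat) = 4%:R ^+ i.+1 * 4%:R ^+ (n - i.+1) by rewrite -exprD hi. field; by rewrite addrC natr1 natS_neq0.
Qed.

Lemma CatL z n : 2%:R * conv (conv z g4) Cat n = conv z g4 n.+1 - conv z B n.+1.
Proof.
rewrite -convA -(conv_sh z (conv g4 Cat) n) -convZr -convBr.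
apply: conv_ext => // -[|i] /=.
  by rewrite mulr0 /g4 /B expr0 bin0 subrr.
exact: Fb.
Qed.

Lemma bump0 i : bump 0 i = i.+1.
Proof. by []. Qed.

Lemma sumL n : \sum_(1 <= j < n.+1) 'C(2 * (n - j), n - j)%:R * (4%:R ^+ j / j%:R) * O (n - j)
  = conv l BO n.
Proof.
rewrite /conv big_ord_recl l0 mul0r add0r big_add1 /= big_mkord.
by apply: eq_bigr => i _; rewrite bump0 /BO /B /l; ring.
Qed.

Definition s4 m : rat := 4%:R ^+ m * Sh m.

Lemma sumA n : \sum_(0 <= j < n.+1) 4%:R ^+ (n.+1 - j - 1) * Cat j * Sh (n.+1 - j - 1)
  = conv Cat s4 n.
Proof.
rewrite big_mkord /conv; apply: eq_bigr => i _.
by rewrite (_ : (n.+1 - i - 1 = n - i)%N) /s4; [ring | lia].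
Qed.

Lemma sumB n : \sum_(1 <= j < n.+2) 4%:R ^+ (j - 1) * Cat (n.+1 - j) * Sh (j - 1)
  = conv s4 Cat n.
Proof.
rewrite big_add1 /= big_mkord /conv; apply: eq_bigr => i _.
by rewrite subn1 /= subSS /s4; ring.
Qed.

Lemma two_neq0 : (2%:R : rat) != 0.
Proof. by rewrite pnatr_eq0. Qed.

Lemma BO_half i : BO i = 2%:R^-1 * conv l B i.
Proof. by rewrite -Fa mulrA mulVf ?two_neq0 // mul1r. Qed.

Lemma core2 n : conv l BO n.+1 = 2%:R^-1 * s4 n.+1 - conv s4 Cat n.
Proof.
have hs : forall m, s4 m = conv (conv l l) g4 m by move=> m; rewrite /s4 -Fe convA.
transitivity (2%:R^-1 * conv l (conv l B) n.+1).
  by rewrite -convZr; apply: conv_ext => // i; exact: BO_half.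
rewrite (conv_ext s4 (conv (conv l l) g4) Cat Cat n) // hs convA.
have hc := CatL (conv l l) n.
have hc' : conv (conv (conv l l) g4) Cat n
   = 2%:R^-1 * (conv (conv l l) g4 n.+1 - conv (conv l l) B n.+1).
  by rewrite -hc mulrA mulVf ?two_neq0 // mul1r.
rewrite hc'; ring.
Qed.

Lemma pow2 n : 2%:R ^+ (2 * n.+1 - 1) = 2%:R^-1 * 4%:R ^+ n.+1 :> rat.
Proof.
rewrite (_ : (2 * n.+1 - 1 = (2 * n).+1)%N); last by lia.
rewrite exprS exprM [4%:R ^+ n.+1]exprS.
have -> : (2%:R ^+ 2 : rat) = 4%:R by rewrite expr2 -natrM.
by field.
Qed.

Definition KL p n := \sum_(1 <= j < n.+1)
   'C(p + j, j.-1)%:R * 'C(2 * (n - j), n - j)%:R * (4%:R ^+ j / j%:R) * O (n - j).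

Lemma KL_conv p n : p.+1%:R * KL p n = conv (E p) BO n - BO n.
Proof.
rewrite /KL big_add1 /= big_mkord /conv big_ord_recl /E expr0 mul1r add0n bin0 mul1r subn0.
rewrite [BO n + _]addrC addrK mulr_sumr; apply: eq_bigr => i _; rewrite ?bump0 ?lift0 /=.
have hn := mul_bin_left (p + i.+1) i.
rewrite (_ : (p + i.+1 - i = p.+1)%N) in hn; last by lia.
have hr : 'C(i.+1 + p, i.+1)%:R = p.+1%:R * 'C(p + i.+1, i)%:R / i.+1%:R :> rat.
  rewrite addnC -natrM -hn natrM; field; by rewrite addrC natr1 natS_neq0.
rewrite hr /BO /B /l; field; by rewrite addrC natr1 natS_neq0.
Qed.

Lemma step_conv p n : (1 <= n)%N ->
  -(B n * O n) + 2%:R^-1 * (Y p.+1 n - 2%:R^-1 * \sum_(1 <= j < n.+1)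
      'C(j + p.+1 - 1, j - 1)%:R * 4%:R ^+ j * (H (p.+1 + j - 1) - H p.+1) * Cat (n - j))
  = conv (E p) BO n - BO n.
Proof.
case: n => // n _.
set z := conv l (E p).
have hs : \sum_(1 <= j < n.+2)
      'C(j + p.+1 - 1, j - 1)%:R * 4%:R ^+ j * (H (p.+1 + j - 1) - H p.+1) * Cat (n.+1 - j)
    = 4%:R * conv (Y p.+1) Cat n.
  rewrite big_add1 /= big_mkord /conv mulr_sumr; apply: eq_bigr => i _.
  rewrite /Y (_ : (i.+1 + p.+1 - 1 = i + p.+1)%N); last by lia.
  rewrite (_ : (p.+1 + i.+1 - 1 = i + p.+1)%N); last by lia.
  by rewrite subn1 /= subSS exprS; ring.
have hY : forall m, Y p.+1 m = conv z g4 m.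
  move=> m; rewrite Fd /z -convA; apply: conv_ext => // i; by rewrite Fc.
rewrite hs (conv_ext (Y p.+1) (conv z g4) Cat Cat n) // hY.
have hc := CatL z n.
have hc' : conv (conv z g4) Cat n = 2%:R^-1 * (conv z g4 n.+1 - conv z B n.+1).
  by rewrite -hc mulrA mulVf ?two_neq0 // mul1r.
have hE : conv (E p) BO n.+1 = 2%:R^-1 * conv z B n.+1.
  rewrite (conv_ext (E p) (E p) BO (fun i => 2%:R^-1 * conv l B i) n.+1) //; last exact: BO_half.
  rewrite convZr convA; congr (_ * _); apply: conv_ext => // i; exact: convC.
rewrite hc' hE /BO; by field.
Qed.

Lemma H0 : H 0 = 0.
Proof. by rewrite /H big_geq. Qed.

Lemma part2 n : (1 <= n)%N ->
    \sum_(1 <= j < n.+1) 'C(2 * (n - j), n - j)%:R * (4%:R ^+ j / j%:R) * O (n - j)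
    = 2%:R ^+ (2 * n - 1) * Sh n
      - \sum_(1 <= j < n.+1) 4%:R ^+ (j - 1) * Cat (n - j) * Sh (j - 1) :> rat.
Proof.
case: n => // n _.
by rewrite sumL sumB core2 pow2 /s4 mulrA.
Qed.

Lemma part1 n p : (1 <= n)%N ->
    \sum_(1 <= j < n.+1)
        'C(p + j, j)%:R * 'C(2 * (n - j), n - j)%:R * (4%:R ^+ j / j%:R) * O (n - j)
    = - ('C(2 * n, n)%:R * H p * O n) + 2%:R ^+ (2 * n - 1) * Sh n
      - \sum_(0 <= j < n) 4%:R ^+ (n - j - 1) * Cat j * Sh (n - j - 1)
      + 2%:R^-1 * \sum_(1 <= k < p.+1) (k%:R)^-1 *
          (4%:R ^+ n * 'C(n + k, n)%:R * (H (n + k) - H k)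
           - 2%:R^-1 * \sum_(1 <= j < n.+1)
               'C(j + k - 1, j - 1)%:R * 4%:R ^+ j * (H (k + j - 1) - H k) * Cat (n - j)).
Proof.
move=> hn; elim: p => [|p IH].
  rewrite H0 [X in 2%:R^-1 * X]big_geq //.
  rewrite (eq_bigr (fun j => 'C(2 * (n - j), n - j)%:R * (4%:R ^+ j / j%:R) * O (n - j))); last first.
    by move=> j _; rewrite add0n binn mul1r.
  case: n hn => // n _.
  rewrite sumL sumA core2 pow2 /s4 convC; ring.
have eL : \sum_(1 <= j < n.+1)
        'C(p.+1 + j, j)%:R * 'C(2 * (n - j), n - j)%:R * (4%:R ^+ j / j%:R) * O (n - j)
   = \sum_(1 <= j < n.+1)
        'C(p + j, j)%:R * 'C(2 * (n - j), n - j)%:R * (4%:R ^+ j / j%:R) * O (n - j)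
     + KL p n.
  rewrite /KL -big_split; apply: eq_big_nat => j /andP [hj _].
  case: j hj => // j _; rewrite addSn binS /= natrD; ring.
have hK : KL p n = p.+1%:R^-1 * (-(B n * O n) + 2%:R^-1 * (Y p.+1 n - 2%:R^-1 * \sum_(1 <= j < n.+1)
      'C(j + p.+1 - 1, j - 1)%:R * 4%:R ^+ j * (H (p.+1 + j - 1) - H p.+1) * Cat (n - j))).
  apply: (mulfI (natS_neq0 p)); rewrite KL_conv mulrA mulfV ?natS_neq0 // mul1r.
  by rewrite step_conv.
rewrite /Y /B in hK.
rewrite eL IH (HS p) hK (big_nat_recr p.+1) //=; ring.
Qed.

Theorem theorem7 :
  (forall n p : nat, (1 <= n)%N ->
    \sum_(1 <= j < n.+1)
        'C(p + j, j)%:R * 'C(2 * (n - j), n - j)%:R * (4%:R ^+ j / j%:R) * O (n - j)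
    = - ('C(2 * n, n)%:R * H p * O n) + 2%:R ^+ (2 * n - 1) * Sh n
      - \sum_(0 <= j < n) 4%:R ^+ (n - j - 1) * Cat j * Sh (n - j - 1)
      + 2%:R^-1 * \sum_(1 <= k < p.+1) (k%:R)^-1 *
          (4%:R ^+ n * 'C(n + k, n)%:R * (H (n + k) - H k)
           - 2%:R^-1 * \sum_(1 <= j < n.+1)
               'C(j + k - 1, j - 1)%:R * 4%:R ^+ j * (H (k + j - 1) - H k) * Cat (n - j)))
  /\
  (forall n : nat, (1 <= n)%N ->
    \sum_(1 <= j < n.+1) 'C(2 * (n - j), n - j)%:R * (4%:R ^+ j / j%:R) * O (n - j)
    = 2%:R ^+ (2 * n - 1) * Sh n
      - \sum_(1 <= j < n.+1) 4%:R ^+ (j - 1) * Cat (n - j) * Sh (j - 1) :> rat).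
Proof.
split; [exact: part1 | exact: part2].
Qed.
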